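(* Let $n\ge 2$, let $A=(a_{ij})$ be an $n\times n$ nonnegative irreducible matrix, and let $c=(c_1,\dots,c_n)^T$ be any vector with all components positive. For $1\le i\le n$ put \[M_i=\frac{1}{c_i}\sum_{j=1}^n a_{ij}c_j,\qquad M=\max_{1\le i\le n} a_{ii},\qquad N=\max_{i\ne j}\frac{a_{ij}c_j}{c_i}.\] Assume (after relabeling indices) that $M_1\ge M_2\ge\cdots\ge M_n$, and that $N>0$. Then for every $1\le i\le n$, \[\rho(A)\le \frac{M_i+M-N+\sqrt{(M_i-M+N)^2+4N\sum_{k=1}^{i-1}(M_k-M_i)}}{2}.\] Moreover, equality holds if and only if either $M_1=M_2=\cdots=M_n$, or there is some $t$ with $2\le t\le i$ such that: (i) $a_{kk}=M$ for $1\le k\le t-1$; (ii) $\frac{a_{kl}c_l}{c_k}=N$ for all $1\le k\le n$, $1\le l\le t-1$ with $k\ne l$; (iii) $M_t=M_{t+1}=\cdots=M_n$.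
   Context: $\rho(A)$ denotes the spectral radius of $A$ (largest modulus of an eigenvalue). An empty sum equals $0$. *)

(* Defs.v *)
(* Scalars live in an arbitrary numeric algebraically closed
   field C (e.g. the complex numbers); the matrix entries are required to be
   nonnegative, hence real. *)
From HB Require Import structures.
From mathcomp Require Import all_boot all_order all_algebra.
Set Implicit Arguments. Unset Strict Implicit. Unset Printing Implicit Defensive.
Import Order.TTheory GRing.Theory Num.Theory.
Local Open Scope ring_scope.

(* binary maximum on C (used only on real, comparable values) *)
Definition maxr (C : numClosedFieldType) (x y : C) : C := if x <= y then y else x.

(* the eigenvalues of A, listed with algebraic multiplicity: the roots of its
   characteristic polynomial, which splits over the closed field C *)
Definition eigenvalues (C : numClosedFieldType) (n : nat) (A : 'M[C]_n) : seq C :=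
  sval (closed_field_poly_normal (char_poly A)).

Definition spectral_radius (C : numClosedFieldType) (n : nat) (A : 'M[C]_n) : C :=
  \big[@maxr C/0]_(l <- eigenvalues A) `|l|.

Definition nonneg_mx (C : numClosedFieldType) (n : nat) (A : 'M[C]_n) : Prop :=
  forall i j, 0 <= A i j.

(* A is reducible iff there is a nonempty proper subset S of indices with
   a_ij = 0 for i in S, j not in S (i.e. A is permutation-similar to a block
   triangular matrix with nontrivial square diagonal blocks). *)
Definition irreducible_mx (C : numClosedFieldType) (n : nat) (A : 'M[C]_n) : Prop :=
  ~ (exists S : {set 'I_n}, [/\ S != set0, S != setT &
        forall i j, i \in S -> j \notin S -> A i j = 0]).

Definition Mrow (C : numClosedFieldType) (n : nat) (A : 'M[C]_n) (c : 'I_n -> C)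
  (i : 'I_n) : C := (c i)^-1 * \sum_(j < n) A i j * c j.

Definition Mdiag (C : numClosedFieldType) (n : nat) (A : 'M[C]_n) : C :=
  \big[@maxr C/0]_(i < n) A i i.

Definition Noff (C : numClosedFieldType) (n : nat) (A : 'M[C]_n) (c : 'I_n -> C) : C :=
  \big[@maxr C/0]_(ij : 'I_n * 'I_n | ij.1 != ij.2) (A ij.1 ij.2 * c ij.2 / c ij.1).

(* the bound, for (0-indexed) i *)
Definition bound (C : numClosedFieldType) (n : nat) (A : 'M[C]_n) (c : 'I_n -> C)
  (i : 'I_n) : C :=
  let Mi := Mrow A c i in let M := Mdiag A in let N := Noff A c in
  (Mi + M - N + sqrtC ((Mi - M + N) ^+ 2
      + 4%:R * N * \sum_(k < n | (k < i)%N) (Mrow A c k - Mi))) / 2%:R.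

(* Main.v *)
Require Import Defs.
From HB Require Import structures.
From mathcomp Require Import all_boot all_order all_algebra.
From mathcomp Require Import ring.
Import Order.TTheory GRing.Theory Num.Theory.
Local Open Scope ring_scope.
Lemma char_poly_tr (F : fieldType) n (A : 'M[F]_n) : char_poly A^T = char_poly A.
Proof.
rewrite /char_poly -det_tr; congr (\det _).
by apply/matrixP => i j; rewrite /char_poly_mx !mxE eq_sym.
Qed.

Lemma mem_eig (C : numClosedFieldType) n (A : 'M[C]_n) l :
  (l \in eigenvalues A) = root (char_poly A) l.
Proof.
rewrite /eigenvalues; case: closed_field_poly_normal => r /= Hr.
by rewrite [in RHS]Hr (monicP (char_poly_monic A)) scale1r root_prod_XsubC.
Qed.

Lemma eig_right (C : numClosedFieldType) n (A : 'M[C]_n) l :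
  root (char_poly A) l -> exists w : 'I_n -> C,
    (exists k, w k != 0) /\ forall k, \sum_j A k j * w j = l * w k.
Proof.
rewrite -char_poly_tr -eigenvalue_root_char => /eigenvalueP [v Hv vn0].
exists (fun j => v 0 j); split.
  case: (pickP (fun k => v 0 k != 0)) => [k Hk|H]; first by exists k.
  case/negP: vn0; apply/eqP/matrixP => i j; rewrite (ord1 i) !mxE.
  by move: (H j) => /= /negbFE /eqP.
move=> k; move/matrixP: Hv => /(_ 0 k); rewrite !mxE => <-.
by apply: eq_bigr => j _; rewrite mxE mulrC.
Qed.

Lemma eig_of_right (C : numClosedFieldType) n (A : 'M[C]_n) l (w : 'I_n -> C) :
  (exists k, w k != 0) -> (forall k, \sum_j A k j * w j = l * w k) ->
  l \in eigenvalues A.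
Proof.
move=> [k Hk] Hw; rewrite mem_eig -char_poly_tr -eigenvalue_root_char.
apply/eigenvalueP; exists (\row_j w j).
  apply/matrixP => i j; rewrite (ord1 i) !mxE -Hw.
  by apply: eq_bigr => m _; rewrite !mxE mulrC.
by apply/negP => /eqP/matrixP /(_ 0 k); rewrite !mxE; apply/eqP.
Qed.

Lemma argmax_real (C : numClosedFieldType) (I : finType) (F : I -> C) (i0 : I) :
  (forall i, F i \is Num.real) -> exists k, forall j, F j <= F k.
Proof.
move=> Hr.
suff [k Hk] : exists k, forall j, j \in enum I -> F j <= F k.
  by exists k => j; apply: Hk; rewrite mem_enum.
elim: (enum I) => [|a s [k Hk]]; first by exists i0.
case/orP: (real_leVge (Hr a) (Hr k)) => H.
  exists k => j; rewrite inE => /orP [/eqP -> //|]; exact: Hk.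
exists a => j; rewrite inE => /orP [/eqP -> //|/Hk Hj]; exact: le_trans Hj H.
Qed.

Lemma MxE (C : numClosedFieldType) (x y : C) : Defs.maxr x y = x \/ Defs.maxr x y = y.
Proof. by rewrite /Defs.maxr; case: ifP; [right|left]. Qed.

Lemma Mx_ge (C : numClosedFieldType) (x y : C) :
  x \is Num.real -> y \is Num.real -> x <= Defs.maxr x y /\ y <= Defs.maxr x y.
Proof.
move=> xr yr; rewrite /Defs.maxr; case: ifP => H; first by rewrite lexx H.
split; first by rewrite lexx.
by apply: ltW; rewrite real_ltNge // H.
Qed.

Lemma Bmax_le (C : numClosedFieldType) (I : eqType) (s : seq I) (P : pred I) (F : I -> C) b :
  0 <= b -> (forall x, x \in s -> P x -> F x <= b) ->
  \big[@Defs.maxr C/0]_(x <- s | P x) F x <= b.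
Proof.
move=> b0 H; rewrite big_seq_cond; apply: (big_ind (fun x => x <= b)) => //.
  by move=> x y Hx Hy; case: (@MxE _ x y) => ->.
by move=> x /andP [Hx Hp]; apply: H.
Qed.

Lemma Bmax_ge0 (C : numClosedFieldType) (I : Type) (s : seq I) (P : pred I) (F : I -> C) :
  (forall x, P x -> 0 <= F x) -> 0 <= \big[@Defs.maxr C/0]_(x <- s | P x) F x.
Proof.
move=> H; apply: (big_ind (fun x => 0 <= x)) => //.
by move=> x y Hx Hy; case: (@MxE _ x y) => ->.
Qed.

Lemma Bmax_ge (C : numClosedFieldType) (I : eqType) (s : seq I) (P : pred I) (F : I -> C) :
  (forall x, P x -> F x \is Num.real) ->
  forall x, x \in s -> P x -> F x <= \big[@Defs.maxr C/0]_(y <- s | P y) F y.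
Proof.
move=> Hr x; elim: s => [//|a s IH].
have Br : \big[@Defs.maxr C/0]_(y <- s | P y) F y \is Num.real.
  apply: (big_ind (fun x => x \is Num.real)) => //.
  by move=> u v Hu Hv; case: (@MxE _ u v) => ->.
rewrite inE big_cons => /orP [/eqP ->|xs] Px.
  by rewrite Px; case: (@Mx_ge _ _ _ (Hr _ Px) Br).
case: ifP => Pa; last exact: IH.
case: (@Mx_ge _ _ _ (Hr _ Pa) Br) => _; exact: le_trans (IH xs Px).
Qed.

Lemma Bmax_attain (C : numClosedFieldType) (I : eqType) (s : seq I) (F : I -> C) :
  \big[@Defs.maxr C/0]_(x <- s) F x = 0 \/
  exists2 x, x \in s & \big[@Defs.maxr C/0]_(x <- s) F x = F x.
Proof.
rewrite big_seq; apply: (big_ind (fun v => v = 0 \/ exists2 x, x \in s & v = F x)).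
- by left.
- by move=> u v Hu Hv; case: (@MxE _ u v) => ->.
- by move=> x xs; right; exists x.
Qed.
Lemma rowsum_bound (C : numClosedFieldType) n (K : 'M[C]_n) (y w : 'I_n -> C) (lam mu : C) :
  (forall k l, 0 <= K k l) -> (forall k, 0 < y k) ->
  (forall k, \sum_l K k l * y l <= lam * y k) ->
  (exists k, w k != 0) -> (forall k, \sum_l K k l * w l = mu * w k) ->
  `|mu| <= lam /\
  (`|mu| = lam -> irreducible_mx K -> forall k, \sum_l K k l * y l = lam * y k).
Proof.
move=> K0 y0 Hy [k1 Hk1] Hw.
pose z k := w k / y k.
have yn0 k : y k != 0 by rewrite gt_eqF.
have wz k : `|w k| = y k * `|z k|.
  by rewrite /z normrM normfV (gtr0_norm (y0 k)) mulrCA mulfV // mulr1.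
have [k0 Hk0] := @argmax_real C _ (fun k => `|z k|) k1 (fun k => normr_real _).
set m := `|z k0| in Hk0.
have m0 : 0 <= m := normr_ge0 _.
have mpos : 0 < m.
  apply: lt_le_trans (Hk0 k1); rewrite normr_gt0 /z mulf_neq0 // invr_eq0 //.
have chain1 k : `|mu| * (y k * `|z k|) <= \sum_l K k l * y l * `|z l|.
  rewrite -wz -normrM -Hw; apply: le_trans (ler_norm_sum _ _ _) _.
  by apply: ler_sum => l _; rewrite normrM (ger0_norm (K0 _ _)) wz mulrA.
have chain2 k : \sum_l K k l * y l * `|z l| <= m * \sum_l K k l * y l.
  rewrite mulr_sumr; apply: ler_sum => l _; rewrite mulrC.
  by apply: ler_wpM2r => //; rewrite mulr_ge0 // ltW.
have chain3 k : m * \sum_l K k l * y l <= m * (lam * y k).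
  by apply: ler_wpM2l.
have H1 : `|mu| <= lam.
  have := le_trans (chain1 k0) (le_trans (chain2 k0) (chain3 k0)).
  rewrite -/m [m * _]mulrC -mulrA.
  by rewrite ler_pM2r // mulr_gt0.
split => // Heq irr.
pose S := [set k | `|z k| == m].
have inS k : k \in S -> (\sum_l K k l * y l = lam * y k) /\
                         (forall l, K k l != 0 -> l \in S).
  rewrite inE => /eqP zk.
  have c1 := chain1 k; have c2 := chain2 k; have c3 := chain3 k.
  rewrite zk Heq in c1.
  have e3 : m * \sum_l K k l * y l = m * (lam * y k).
    apply: le_anti; rewrite c3 /=.
    rewrite (_ : m * (lam * y k) = lam * (y k * m)); last by ring.
    exact: le_trans c1 c2.
  have e2 : \sum_l K k l * y l * `|z l| = m * \sum_l K k l * y l.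
    apply: le_anti; rewrite c2 /= e3.
    rewrite (_ : m * (lam * y k) = lam * (y k * m)); last by ring.
    exact: c1.
  split; first by apply: (mulfI (x:=m)); rewrite ?gt_eqF.
  have e0 : \sum_l K k l * y l * (m - `|z l|) = 0.
    rewrite (eq_bigr (fun l => K k l * y l * m - K k l * y l * `|z l|)); last first.
      by move=> l _; ring.
    rewrite sumrB e2 mulr_sumr; apply/eqP; rewrite subr_eq0; apply/eqP; apply: eq_bigr => l _; ring.
  have P0 : forall i : 'I_n, true -> 0 <= K k i * y i * (m - `|z i|).
    by move=> i _; rewrite !mulr_ge0 ?subr_ge0 ?K0 ?Hk0 // ltW.
  move=> l Kn0; have := @psumr_eq0P _ _ _ _ P0 e0 l isT.
  move=> /eqP; rewrite !mulf_eq0 (negbTE Kn0) (negbTE (yn0 l)) /=.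
  by rewrite subr_eq0 inE eq_sym.
have ST : S = setT.
  case: (S =P setT) => // SnT; exfalso; apply: irr; exists S; split.
  - by apply/set0Pn; exists k0; rewrite inE.
  - by apply/eqP.
  - move=> i j iS jnS; case: (eqVneq (K i j) 0) => // Kn0.
    by move: jnS; rewrite ((inS i iS).2 j Kn0).
move=> k; have kS : k \in S by rewrite ST inE.
exact: (inS k kS).1.
Qed.

(* Indices are 0-based: paper index i corresponds to i : 'I_n with value i-1. *)
Theorem theorem1 (C : numClosedFieldType) (n : nat) (A : 'M[C]_n) (c : 'I_n -> C) :
  (2 <= n)%N ->
  nonneg_mx A ->
  irreducible_mx A ->
  (forall i, 0 < c i) ->
  (forall i j : 'I_n, (i <= j)%N -> Mrow A c j <= Mrow A c i) ->
  0 < Noff A c ->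
  forall i : 'I_n,
    spectral_radius A <= bound A c i /\
    (spectral_radius A = bound A c i <->
      ((forall j k : 'I_n, Mrow A c j = Mrow A c k) \/
       exists t : 'I_n, [/\ (1 <= t)%N, (t <= i)%N,
         (forall k : 'I_n, (k < t)%N -> A k k = Mdiag A),
         (forall k l : 'I_n, (l < t)%N -> k != l -> A k l * c l / c k = Noff A c) &
         (forall k l : 'I_n, (t <= k)%N -> (t <= l)%N -> Mrow A c k = Mrow A c l)])).
Proof.
move=> n2 A0 irr c0 sorted Npos i.
pose b k l := A k l * c l / c k.
have cn0 k : c k != 0 by rewrite gt_eqF.
have b0 k l : 0 <= b k l by rewrite /b !mulr_ge0 ?invr_ge0 ?A0 // ltW.
have bkk k : b k k = A k k by rewrite /b mulfK.
set M := Mdiag A. set N := Noff A c.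
pose Mr := Mrow A c.
have MrE k : Mr k = \sum_l b k l.
  by rewrite /Mr /Mrow mulr_sumr; apply: eq_bigr => l _; rewrite /b mulrC.
have bM k : b k k <= M.
  rewrite bkk /M /Mdiag; apply: (@Bmax_ge _ _ _ _ (fun k => A k k)) => //.
  by move=> x _; apply: ger0_real.
  by rewrite mem_index_enum.
have bN k l : k != l -> b k l <= N.
  move=> kl; rewrite /N /Noff.
  apply: (@Bmax_ge _ _ _ _ (fun ij : 'I_n * 'I_n => A ij.1 ij.2 * c ij.2 / c ij.1) _ (k, l)) => //.
  by move=> x _; apply: ger0_real; apply: (b0 x.1 x.2).
  by rewrite mem_index_enum.
have M0 : 0 <= M by apply: Bmax_ge0 => x _; apply: A0.
have bMr k l : b k l <= Mr k.
  by rewrite MrE (bigD1 l) //= lerDl sumr_ge0.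
have Mr0 k : 0 <= Mr k by apply: le_trans (bMr k k).
have o0lt : (0 < n)%N by apply: leq_trans n2.
pose o0 : 'I_n := Ordinal o0lt.
have MrM0 k : Mr k <= Mr o0 by apply: sorted.
have MleM0 : M <= Mr o0.
  rewrite /M /Mdiag; apply: (@Bmax_le _ _ _ _ (fun x => A x x)) => //.
  move=> x _ _; rewrite -bkk; exact: le_trans (bMr x x) (MrM0 x).
have NleM0 : N <= Mr o0.
  rewrite /N /Noff; apply: (@Bmax_le _ _ _ _ (fun ij : 'I_n * 'I_n => A ij.1 ij.2 * c ij.2 / c ij.1)) => // x _ _; exact: le_trans (bMr x.1 x.2) (MrM0 x.1).
pose Sg := \sum_(k < n | (k < i)%N) (Mr k - Mr i).
have Sgt0 : forall k : 'I_n, (k < i)%N -> 0 <= Mr k - Mr i.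
  by move=> k ki; rewrite subr_ge0 sorted // ltnW.
have Sg0 : 0 <= Sg by apply: sumr_ge0.
have SgZ : Sg = 0 -> Mr o0 = Mr i.
  move=> H; case: (posnP i) => [i0|ipos].
    by congr Mr; apply: val_inj; rewrite /= i0.
  by move/eqP: (psumr_eq0P Sgt0 H (i:=o0) ipos); rewrite subr_eq0 => /eqP.
have Nr : N \is Num.real by apply: ger0_real; apply: ltW.
have Mr_r k : Mr k \is Num.real by apply: ger0_real.
have Mreal : M \is Num.real by apply: ger0_real.
pose q := Mr i - M + N.
have qr : q \is Num.real by rewrite /q rpredD ?rpredB.
pose R := q ^+ 2 + 4%:R * N * Sg.
have R0 : 0 <= R.
  rewrite /R; apply: addr_ge0; first by rewrite -real_normK //; apply/exprn_ge0/normr_ge0.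
  by rewrite !mulr_ge0 ?ler0n ?Sg0 // ltW.
pose s := sqrtC R.
have s0 : 0 <= s by rewrite sqrtC_ge0.
have s2 : s ^+ 2 = R by rewrite sqrtCK.
have sq : `|q| <= s.
  rewrite -(@ler_pXn2r _ 2) ?nnegrE ?normr_ge0 // real_normK // s2 /R lerDl.
  by rewrite !mulr_ge0 ?ler0n ?Sg0 // ltW.
have sqp : q <= s by apply: le_trans (real_ler_norm qr) sq.
have sqm : - q <= s by apply: le_trans sq; rewrite -normrN real_ler_norm ?rpredN.
have two0 : (2%:R : C) != 0 by rewrite pnatr_eq0.
pose lam := bound A c i.
have lamE : lam = (Mr i + M - N + s) / 2%:R by [].
have lamMi : lam - Mr i = (s - q) / 2%:R by rewrite lamE /q; field.
pose d := lam - M + N.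
have dE : d = (s + q) / 2%:R by rewrite /d lamE /q; field.
have key : (lam - Mr i) * d = N * Sg.
  have NSg : N * Sg = (R - q ^+ 2) / 4%:R by rewrite /R; field.
  by rewrite lamMi dE NSg -s2; field.
have lamMi0 : Mr i <= lam.
  by rewrite -subr_ge0 lamMi; apply: divr_ge0; rewrite ?ler0n ?subr_ge0.
have sqpos : 0 < s + q.
  rewrite lt_def; apply/andP; split; last by rewrite -(opprK q) subr_ge0.
  apply/eqP => sq0.
  have Sgz : Sg = 0.
    have : s ^+ 2 = q ^+ 2 by rewrite (_ : s = - q) ?sqrrN //; apply/eqP; rewrite -addr_eq0 sq0.
    rewrite s2 /R -{2}[q ^+ 2]addr0 => /addrI /eqP.
    by rewrite !mulf_eq0 pnatr_eq0 (gt_eqF Npos) /= => /eqP.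
  have qpos : 0 < q.
    by rewrite /q -(SgZ Sgz); apply: lt_le_trans Npos _; rewrite lerDr subr_ge0.
  have : 0 <= - q by rewrite (_ : - q = s) //; apply/eqP; rewrite eq_sym -addr_eq0 sq0.
  rewrite oppr_ge0 => /(lt_le_trans qpos); rewrite ltxx.
  by [].
have dpos : 0 < d by rewrite dE; apply: divr_gt0; rewrite ?ltr0n.
have dn0 : d != 0 by rewrite gt_eqF.
have lampos : 0 < lam.
  rewrite lt_def (le_trans (Mr0 i) lamMi0) andbT; apply/eqP => l0.
  have Mi0 : Mr i = 0 by apply: le_anti; rewrite Mr0 andbT -l0 lamMi0.
  have : N * Sg = 0 by rewrite -key l0 Mi0 subrr mul0r.
  move/eqP; rewrite mulf_eq0 (gt_eqF Npos) /= => /eqP /SgZ.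
  by rewrite Mi0 => H; have := lt_le_trans Npos NleM0; rewrite H ltxx.
pose e (k : 'I_n) := if (k < i)%N then (Mr k - Mr i) / d else 0.
have e0 k : 0 <= e k.
  by rewrite /e; case: ifP => // ki; apply: divr_ge0 (Sgt0 k ki) (ltW dpos).
pose E := \sum_l e l.
have NE : N * E = lam - Mr i.
  have -> : E = Sg / d.
    rewrite /E /Sg mulr_suml [RHS]big_mkcond /=; apply: eq_bigr => k _.
    by rewrite /e; case: ifP => //; rewrite mul0r.
  by rewrite mulrA -key mulfK.
have ekey k : Mr k - Mr i <= d * e k /\ ((k < i)%N -> Mr k - Mr i = d * e k).
  rewrite /e; case: ifP => ki.
    by rewrite [d * _]mulrC divfK //; split.
  by split => //; rewrite mulr0 subr_le0 sorted // leqNgt ki.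
pose g (k l : 'I_n) := (if l == k then M else N) * e l.
have gb k l : b k l * e l <= g k l.
  rewrite /g; case: eqP => [->|/eqP kl]; first exact: (ler_wpM2r (e0 k) (bM k)).
  by apply: (ler_wpM2r (e0 l)); apply: bN; rewrite eq_sym.
have Sgk k : \sum_l g k l = N * E + (M - N) * e k.
  rewrite (bigD1 k) //= /g eqxx.
  rewrite (eq_bigr (fun l => N * e l)); last by move=> l /negbTE ->.
  by rewrite -mulr_sumr /E [in RHS](bigD1 k) //=; ring.
pose T (k : 'I_n) := \sum_l b k l * e l.
have chle k : Mr k + T k <= lam * (1 + e k).
  apply: le_trans (lerD (lexx (Mr k)) (ler_sum _ (fun l _ => gb k l))) _.
  rewrite Sgk NE -subr_ge0.
  rewrite (_ : lam * (1 + e k) - _ = d * e k - (Mr k - Mr i)); last by rewrite /d; ring.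
  by rewrite subr_ge0; case: (ekey k).
have chtight k : Mr k + T k = lam * (1 + e k) <->
                 (T k = \sum_l g k l /\ Mr k - Mr i = d * e k).
  split; last first.
    by move=> [-> P2]; rewrite Sgk NE; move: P2; rewrite /d => P2;
       apply/eqP; rewrite -subr_eq0; apply/eqP; rewrite (_ : Mr k = Mr i + (lam - M + N) * e k);
       [ring | rewrite -P2; ring].
  move=> H.
  have Tg : T k <= \sum_l g k l by apply: ler_sum => l _; apply: gb.
  have H2 : Mr k + \sum_l g k l <= lam * (1 + e k).
    rewrite Sgk NE -subr_ge0.
    rewrite (_ : lam * (1 + e k) - _ = d * e k - (Mr k - Mr i)); last by rewrite /d; ring.
    by rewrite subr_ge0; case: (ekey k).
  have TE : T k = \sum_l g k l.
    apply: le_anti; rewrite Tg /=; move: H2; rewrite -H; by rewrite lerD2l.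
  split => //.
  move: H; rewrite TE Sgk NE => H.
  have : (Mr k - Mr i) - d * e k = (Mr k + (N * E + (M - N) * e k)) - lam * (1 + e k).
    by rewrite NE /d; ring.
  by rewrite NE H subrr => /eqP; rewrite subr_eq0 => /eqP.
pose y (k : 'I_n) := c k * (1 + e k).
have ype k : 0 < 1 + e k by apply: lt_le_trans ltr01 _; rewrite lerDl.
have ypos k : 0 < y k by apply: mulr_gt0.
have rowA k : \sum_l A k l * y l = c k * (Mr k + T k).
  rewrite MrE /T -big_split /= mulr_sumr; apply: eq_bigr => l _.
  by rewrite /y /b; field.
have yk k : lam * y k = c k * (lam * (1 + e k)) by rewrite /y; ring.
have ineq k : \sum_l A k l * y l <= lam * y k.
  by rewrite rowA yk; exact: (ler_wpM2l (ltW (c0 k)) (chle k)).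
have rhoub : spectral_radius A <= lam.
  rewrite /spectral_radius; apply: Bmax_le (ltW lampos) _ => l ls _.
  move: ls; rewrite mem_eig => /eig_right [w [wn0 Hw]].
  exact: (@rowsum_bound C n A y w lam l A0 ypos ineq wn0 Hw).1.
split => //.
have tightA : (forall k, \sum_l A k l * y l = lam * y k) <->
    (forall k, T k = \sum_l g k l /\ Mr k - Mr i = d * e k).
  split => H k.
    apply/chtight; apply: (mulfI (cn0 k)); rewrite -rowA -yk; exact: H k.
  by rewrite rowA yk; congr (_ * _); apply/chtight; exact: H k.
have termw k : T k = \sum_l g k l <-> forall l, b k l * e l = g k l.
  split; last by move=> H; apply: eq_bigr => l _; apply: H.
  move=> H l.
  have P0 : forall l, true -> 0 <= g k l - b k l * e l by move=> l' _; rewrite subr_ge0.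
  have S0 : \sum_l (g k l - b k l * e l) = 0 by rewrite sumrB -H /T subrr.
  by move/eqP: (psumr_eq0P P0 S0 (i:=l) isT); rewrite subr_eq0 eq_sym => /eqP.
have lam_eig : (forall k, \sum_l A k l * y l = lam * y k) -> spectral_radius A = lam.
  move=> H; apply: le_anti; rewrite rhoub /=.
  have lin : lam \in eigenvalues A.
    by apply: (@eig_of_right C n A lam y) => //; exists o0; rewrite gt_eqF.
  rewrite -{1}(gtr0_norm lampos) /spectral_radius.
  apply: (@Bmax_ge C _ _ _ (fun l => `|l|)) => // x _; exact: normr_real.
split.
  move=> rho_eq.
  have Hall : forall k, \sum_l A k l * y l = lam * y k.
    case: (@Bmax_attain C _ (eigenvalues A) (fun l => `|l|)) => [H0|[l ls Hl]].
      by move: lampos; rewrite /lam -rho_eq /spectral_radius H0 ltxx.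
    move: ls; rewrite mem_eig => /eig_right [w [wn0 Hw]].
    apply: ((@rowsum_bound C n A y w lam l A0 ypos ineq wn0 Hw).2) => //.
    by rewrite -Hl; exact: rho_eq.
  move/tightA: Hall => Ht.
  have P2 k : Mr k - Mr i = d * e k := (Ht k).2.
  have TW k l : b k l * e l = g k l := (termw k).1 (Ht k).1 l.
  have ege (k : 'I_n) : (i <= k)%N -> e k = 0 by rewrite /e ltnNge => ->.
  have Mge (k : 'I_n) : (i <= k)%N -> Mr k = Mr i.
    by move=> ik; apply/eqP; rewrite -subr_eq0 P2 ege // mulr0.
  case: (@arg_minnP _ i (fun k => Mr k == Mr i) (fun k => val k) (eqxx _)) => t /eqP Mt tmin.
  have tle : (t <= i)%N := tmin i (eqxx _).
  have Mtail (k : 'I_n) : (t <= k)%N -> Mr k = Mr i.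
    move=> tk; case: (leqP i k) => [/Mge //|ki].
    by apply: le_anti; rewrite -{1}Mt sorted //= sorted // ltnW.
  case: (posnP t) => [t0|tpos].
    by left => j k; change (Mr j = Mr k); rewrite (Mtail j) ?(Mtail k) // t0.
  right; exists t; split => //.
  - have ekpos (k : 'I_n) : (k < t)%N -> e k != 0.
      move=> kt; have ki : (k < i)%N := leq_trans kt tle.
      rewrite /e ki mulf_eq0 invr_eq0 (negbTE dn0) orbF subr_eq0.
      by apply/negP => /tmin; rewrite leqNgt kt.
    move=> k kt; rewrite -bkk; apply: (mulIf (ekpos k kt)); by rewrite TW /g eqxx.
  - move=> k l lt kl.
    have ekpos : e l != 0.
      have li : (l < i)%N := leq_trans lt tle.
      rewrite /e li mulf_eq0 invr_eq0 (negbTE dn0) orbF subr_eq0.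
      by apply/negP => /tmin; rewrite leqNgt lt.
    change (b k l = N); apply: (mulIf ekpos); rewrite TW /g.
    by rewrite eq_sym (negbTE kl).
  - by move=> k l tk tl; change (Mr k = Mr l); rewrite !Mtail.
case => [Hall | [t [t1 ti Hdiag Hoff Htail]]].
  apply: lam_eig; apply/tightA => k.
  have ez l : e l = 0 by rewrite /e; case: ifP => // _; rewrite /Mr (Hall l i) subrr mul0r.
  split; first by rewrite /T /g; apply: eq_bigr => l _; rewrite ez !mulr0.
  by rewrite ez mulr0 /Mr (Hall k i) subrr.
apply: lam_eig; apply/tightA => k.
have Mt (l : 'I_n) : (t <= l)%N -> Mr l = Mr i := fun H => Htail l i H ti.
have ez (l : 'I_n) : (t <= l)%N -> e l = 0.
  by move=> tl; rewrite /e; case: ifP => // _; rewrite Mt // subrr mul0r.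
split.
  apply/termw => l; case: (leqP t l) => [tl|lt]; first by rewrite /g ez // !mulr0.
  rewrite /g; case: eqP => [lk|/eqP lk]; first by rewrite -lk bkk Hdiag.
  by rewrite /b (Hoff k l lt) // eq_sym.
case: (ltnP k i) => [ki|ik]; first exact: (ekey k).2.
by rewrite ez ?mulr0 ?Mt ?subrr //; apply: leq_trans ti ik.
Qed.
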